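(* Let $N$ be a well-formed system (i.e. $N$ is coherent and $\vdash N:\mathbf{ok}$ is derivable) in the calculus with set policies. If $N \to N'$, then $N'$ is also well-formed; in particular $\vdash N':\mathbf{ok}$.
   Context: Fix two disjoint sets: basic actions $\mathsf{Act}$ (ranged over by $a,b,\dots$) and localities $\mathsf{Loc}$ (ranged over by $l,k,h,\dots$). In this setting a policy is a finite subset of $\mathsf{Act}\cup\mathsf{Loc}$, and $T_1 \ \mathtt{enforces}\ T_2$ means $T_1\subseteq T_2$. Agents: $P,Q,R ::= \mathbf{nil} \mid a.P \mid \mathbf{go}_T\, l.P \mid P\,|\,Q \mid\ !P$, where $T$ is a policy (the digest of $P$). Systems: $N ::= \mathbf{0} \mid l[\![M \rhd P]\!] \mid N_1\parallel N_2$; site names in a system are pairwise distinct, and $M^l$ denotes the membrane of site $l$. A membrane is a pair $M=(M_t,M_p)$ where $M_t$ is a partial function from $\mathsf{Loc}$ to $\{\mathtt{loc},\mathtt{lgood},\mathtt{lbad}\}$ and $M_p$ is a policy. Structural equivalence $\equiv$ is the least congruence on systems such that, inside a site, $|$ is commutative and associative with unit $\mathbf{nil}$ and $l[\![M\rhd\ !P\,|\,Q]\!]\equiv l[\![M\rhd P\,|\,!P\,|\,Q]\!]$, and $\parallel$ is commutative and associative with unit $\mathbf{0}$. Reduction $\to$ is the least relation with: (act) $l[\![M\rhd a.P\,|\,Q]\!]\to l[\![M\rhd P\,|\,Q]\!]$; (par) $N_1\to N_1'$ implies $N_1\parallel N_2\to N_1'\parallel N_2$; (struct) $N\equiv N_1\to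 N_1'\equiv N'$ implies $N\to N'$; (mig) $k[\![M^k\rhd \mathbf{go}_T\,l.P\,|\,Q]\!]\parallel l[\![M^l\rhd R]\!]\to k[\![M^k\rhd Q]\!]\parallel l[\![M^l\rhd P\,|\,R]\!]$ provided $M^l\vdash^k_T P$, where $M^l\vdash^k_T P$ means: if $M^l_t(k)=\mathtt{lgood}$ then $T\subseteq M^l_p$, else $\vdash P:M^l_p$. The judgement $\vdash P:T$ is the least relation with: $\vdash\mathbf{nil}:T$; $\vdash a.P:T$ if $a\in T$ and $\vdash P:T$; $\vdash \mathbf{go}_{T'}\,l.P:T$ if $l\in T$ and $\vdash P:T'$; $\vdash\ !P:T$ if $\vdash P:T$; $\vdash P|Q:T$ if $\vdash P:T$ and $\vdash Q:T$. Trust order: $<:$ is the reflexive relation with $\mathtt{loc}<:\mathtt{lbad}$ and $\mathtt{loc}<:\mathtt{lgood}$. A site $k$ of $N$ is trustworthy if $M^k_t(k)=\mathtt{lgood}$. $N$ is coherent if for every trustworthy site $k$ and every site $l$ of $N$ with $M^k_t(l)$ defined, $M^k_t(l)<: M^l_t(l)$. The judgement $\vdash N:\mathbf{ok}$ is the least relation with: $\vdash\mathbf{0}:\mathbf{ok}$; $\vdash N_1\parallel N_2:\mathbf{ok}$ if both $\vdash N_i:\mathbf{ok}$; $\vdash l[\![M\rhd P]\!]:\mathbf{ok}$ if $l$ is trustworthy and $\vdash P:M_p$; $\vdash l[\![M\rhd P]\!]:\mathbf{ok}$ if $l$ is not trustworthy. *)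

(* Defs.v *)
From Stdlib Require Import List.
Import ListNotations.
Set Implicit Arguments.

Section Calculus.
Variables Act Loc : Type.

Definition policy := list (Act + Loc).
Definition enforces (T1 T2 : policy) : Prop := incl T1 T2.
Definition inAct (a : Act) (T : policy) : Prop := In (inl a) T.
Definition inLoc (l : Loc) (T : policy) : Prop := In (inr l) T.

Inductive trust := tloc | lgood | lbad.

Inductive trust_le : trust -> trust -> Prop :=
| trust_le_refl t : trust_le t t
| trust_le_bad : trust_le tloc lbad
| trust_le_good : trust_le tloc lgood.

Record membrane := Membrane {
  mt : Loc -> option trust;
  mp : policy }.

Inductive agent :=
| Nil
| Act_ (a : Act) (P : agent)
| Go (T : policy) (l : Loc) (P : agent)
| Par (P Q : agent)
| Bang (P : agent).

Inductive system :=
| Zero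
| Site (l : Loc) (M : membrane) (P : agent)
| PPar (N1 N2 : system).

Inductive typed : agent -> policy -> Prop :=
| ty_nil T : typed Nil T
| ty_act a P T : inAct a T -> typed P T -> typed (Act_ a P) T
| ty_go T' l P T : inLoc l T -> typed P T' -> typed (Go T' l P) T
| ty_bang P T : typed P T -> typed (Bang P) T
| ty_par P Q T : typed P T -> typed Q T -> typed (Par P Q) T.

Fixpoint sites (N : system) : list (Loc * membrane * agent) :=
  match N with
  | Zero => []
  | Site l M P => [(l, M, P)]
  | PPar N1 N2 => sites N1 ++ sites N2
  end.

Definition site_names (N : system) : list Loc :=
  map (fun s => fst (fst s)) (sites N).

Definition distinct_sites (N : system) : Prop := NoDup (site_names N).

Definition trustworthy (k : Loc) (M : membrane) : Prop := mt M k = Some lgood.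

Definition coherent (N : system) : Prop :=
  forall k Mk Pk l Ml Pl,
    In (k, Mk, Pk) (sites N) -> In (l, Ml, Pl) (sites N) ->
    trustworthy k Mk ->
    forall t, mt Mk l = Some t ->
    exists t', mt Ml l = Some t' /\ trust_le t t'.

Inductive ok : system -> Prop :=
| ok_zero : ok Zero
| ok_par N1 N2 : ok N1 -> ok N2 -> ok (PPar N1 N2)
| ok_trusted l M P : trustworthy l M -> typed P (mp M) -> ok (Site l M P)
| ok_untrusted l M P : ~ trustworthy l M -> ok (Site l M P).

Definition well_formed (N : system) : Prop := coherent N /\ ok N.

Inductive sequiv : system -> system -> Prop :=
| se_refl N : sequiv N N
| se_sym N1 N2 : sequiv N1 N2 -> sequiv N2 N1
| se_trans N1 N2 N3 : sequiv N1 N2 -> sequiv N2 N3 -> sequiv N1 N3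
| se_ppar N1 N1' N2 N2' : sequiv N1 N1' -> sequiv N2 N2' ->
    sequiv (PPar N1 N2) (PPar N1' N2')
| se_site_comm l M P Q : sequiv (Site l M (Par P Q)) (Site l M (Par Q P))
| se_site_assoc l M P Q R :
    sequiv (Site l M (Par (Par P Q) R)) (Site l M (Par P (Par Q R)))
| se_site_unit l M P : sequiv (Site l M (Par P Nil)) (Site l M P)
| se_site_bang l M P Q :
    sequiv (Site l M (Par (Bang P) Q)) (Site l M (Par P (Par (Bang P) Q)))
| se_ppar_comm N1 N2 : sequiv (PPar N1 N2) (PPar N2 N1)
| se_ppar_assoc N1 N2 N3 :
    sequiv (PPar (PPar N1 N2) N3) (PPar N1 (PPar N2 N3))
| se_ppar_unit N : sequiv (PPar N Zero) N.

Definition mig_ok (Ml : membrane) (k : Loc) (T : policy) (P : agent) : Prop :=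
  match mt Ml k with
  | Some lgood => enforces T (mp Ml)
  | _ => typed P (mp Ml)
  end.

Inductive red : system -> system -> Prop :=
| r_act l M a P Q : red (Site l M (Par (Act_ a P) Q)) (Site l M (Par P Q))
| r_par N1 N1' N2 : red N1 N1' -> red (PPar N1 N2) (PPar N1' N2)
| r_struct N N1 N1' N' : sequiv N N1 -> red N1 N1' -> sequiv N1' N' -> red N N'
| r_mig k Mk T l P Q Ml R : mig_ok Ml k T P ->
    red (PPar (Site k Mk (Par (Go T l P) Q)) (Site l Ml R))
        (PPar (Site k Mk Q) (Site l Ml (Par P R))).

End Calculus.

(* Main.v *)
Require Import Defs.
From Stdlib Require Import List.
Import ListNotations.

Section S.
Variables Act Loc : Type.

Definition pr (N : system Act Loc) := map fst (sites N).

Definition cohP (L : list (Loc * membrane Act Loc)) : Prop :=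
  forall k Mk l Ml, In (k, Mk) L -> In (l, Ml) L -> trustworthy k Mk ->
    forall t, mt Mk l = Some t -> exists t', mt Ml l = Some t' /\ trust_le t t'.

Lemma cohP_incl L L' : incl L' L -> cohP L -> cohP L'.
Proof. unfold cohP; intros Hi H k Mk l Ml H1 H2; apply H; auto. Qed.

Lemma coh_iff N : coherent N <-> cohP (pr N).
Proof.
  unfold coherent, cohP, pr; split.
  - intros H k Mk l Ml H1 H2. apply in_map_iff in H1 as [[[a b] c] [E1 H1]].
    apply in_map_iff in H2 as [[[a' b'] c'] [E2 H2]]. simpl in *.
    inversion E1; inversion E2; subst. eauto.
  - intros H k Mk Pk l Ml Pl H1 H2. apply H.
    + change (k, Mk) with (fst (k, Mk, Pk)); apply in_map; auto.
    + change (l, Ml) with (fst (l, Ml, Pl)); apply in_map; auto.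
Qed.

Lemma typed_mono (P : agent Act Loc) T : typed P T -> forall T', incl T T' -> typed P T'.
Proof.
  induction 1; intros T0 Hi; constructor; unfold inAct, inLoc in *; auto.
Qed.

Lemma sequiv_ok (N1 N2 : system Act Loc) : sequiv N1 N2 ->
  (ok N1 <-> ok N2) /\ incl (pr N1) (pr N2) /\ incl (pr N2) (pr N1).
Proof.
  induction 1; unfold pr in *; simpl in *; rewrite ?map_app in *.
  - repeat split; auto using incl_refl.
  - intuition.
  - intuition; eauto using incl_tran.
  - destruct IHsequiv1 as [[A B] [C D]]. destruct IHsequiv2 as [[E F] [G H']].
    repeat split.
    + intro K; inversion K; subst; constructor; auto.
    + intro K; inversion K; subst; constructor; auto.
    + apply incl_app; [apply incl_appl|apply incl_appr]; auto.
    + apply incl_app; [apply incl_appl|apply incl_appr]; auto.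
  - repeat split; auto using incl_refl; intro K; inversion K; subst;
      try (apply ok_untrusted; assumption);
      match goal with H : typed _ _ |- _ => inversion H; subst end;
      apply ok_trusted; auto; constructor; auto.
  - repeat split; auto using incl_refl; intro K; inversion K; subst;
      try (apply ok_untrusted; assumption);
      match goal with H : typed _ _ |- _ => inversion H; subst end;
      apply ok_trusted; auto.
    + match goal with H : typed (Par _ _) _ |- _ => inversion H; subst end.
      repeat constructor; auto.
    + match goal with H : typed (Par _ _) _ |- _ => inversion H; subst end.
      repeat constructor; auto.
  - repeat split; auto using incl_refl; intro K; inversion K; subst;
      try (apply ok_untrusted; assumption).
    + match goal with H : typed _ _ |- _ => inversion H; subst end.
      apply ok_trusted; auto.
    + apply ok_trusted; auto; repeat constructor; auto.
  - repeat split; auto using incl_refl; intro K; inversion K; subst;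
      try (apply ok_untrusted; assumption);
      match goal with H : typed _ _ |- _ => inversion H; subst end;
      apply ok_trusted; auto;
      repeat match goal with H : typed (Bang _) _ |- _ => inversion H; subst; clear H
        | H : typed (Par _ _) _ |- _ => inversion H; subst; clear H end;
      repeat constructor; auto.
  - repeat split.
    + intro K; inversion K; subst; constructor; auto.
    + intro K; inversion K; subst; constructor; auto.
    + apply incl_app; [apply incl_appr|apply incl_appl]; apply incl_refl.
    + apply incl_app; [apply incl_appr|apply incl_appl]; apply incl_refl.
  - rewrite app_assoc; repeat split; auto using incl_refl.
    + intro K; inversion K; subst;
      match goal with H : ok (PPar _ _) |- _ => inversion H; subst end;
      repeat constructor; auto.
    + intro K; inversion K; subst;
      match goal with H : ok (PPar _ _) |- _ => inversion H; subst end;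
      repeat constructor; auto.
  - rewrite app_nil_r; repeat split; auto using incl_refl.
    + intro K; inversion K; auto.
    + intro K; constructor; auto; constructor.
Qed.

Lemma red_ok (N N' : system Act Loc) : red N N' -> cohP (pr N) -> ok N ->
  ok N' /\ incl (pr N') (pr N).
Proof.
  induction 1; intros Hc Ho.
  - split; [|apply incl_refl]. inversion Ho; subst.
    + match goal with H : typed _ _ |- _ => inversion H; subst end.
      match goal with H : typed (Act_ _ _) _ |- _ => inversion H; subst end.
      apply ok_trusted; auto; constructor; auto.
    + apply ok_untrusted; auto.
  - inversion Ho; subst. unfold pr in *; simpl in *.
    rewrite ?map_app in *; destruct IHred as [A B]; auto.
    + eapply cohP_incl; [|exact Hc]. apply incl_appl, incl_refl.
    + split; [constructor; auto|].
      apply incl_app; [apply incl_appl; auto|apply incl_appr, incl_refl].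
  - destruct (@sequiv_ok _ _ H) as [[A _] [_ B]].
    destruct (@sequiv_ok _ _ H1) as [[C _] [_ D]].
    destruct IHred as [E F]; auto.
    + eapply cohP_incl; eauto.
    + split; [apply C; auto|]. eauto using incl_tran.
  - split; [|unfold pr; simpl; apply incl_refl].
    inversion Ho; subst.
    match goal with H : ok (Site k _ _) |- _ => inversion H; subst end;
    match goal with H : ok (Site l _ _) |- _ => inversion H; subst end;
    constructor;
    try (apply ok_untrusted; assumption);
    try (match goal with H : typed (Par (Go _ _ _) _) _ |- _ =>
          inversion H; subst end; apply ok_trusted; assumption).
    all: apply ok_trusted; auto; constructor; auto;
      unfold mig_ok in H; destruct (mt Ml k) as [[| |]|] eqn:E; auto.
    all: assert (Hk : trustworthy k Mk) by
      (destruct (Hc l Ml k Mk (or_intror (or_introl eq_refl))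
                  (or_introl eq_refl) ltac:(assumption) lgood E) as [t' [E' Hl]];
       inversion Hl; subst; exact E').
    all: try contradiction.
    match goal with H : typed (Par (Go _ _ _) _) _ |- _ =>
          inversion H; subst end.
    match goal with H : typed (Go _ _ _) _ |- _ => inversion H; subst end.
    eapply typed_mono; eauto.
Qed.

End S.

Theorem mainTheorem1 (Act Loc : Type) (N N' : system Act Loc) :
  distinct_sites N -> coherent N -> ok N -> red N N' ->
  well_formed N' /\ ok N'.
Proof.
  intros _ Hc Ho Hr. apply coh_iff in Hc.
  destruct (red_ok _ _ _ _ Hr Hc Ho) as [A B].
  split; [split|]; auto. apply coh_iff. eapply cohP_incl; eauto.
Qed.
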